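(* In the setting described in the context, suppose conditions (E) and (M) hold. Then for any compact set $A\subset\Omega$ with $|A|>0$ and any $\delta>0$, as $N\to\infty$, \[ \mathbb P_N\big[\max_AX\le(\gamma_*-\delta)\log\epsilon_N^{-1}\big]\to0. \]
   Context: $\Omega\subset\mathbb R^d$ is a bounded, simply connected open set with smooth boundary; $|\cdot|$ is Lebesgue measure; $\gamma_*=\sqrt{2d}$. For each $N$, $\mathbb P_N$ (expectation $\mathbb E_N$) is a probability measure under which the canonical process $X$ is a random function on $\Omega$ that is integrable, bounded above and upper semicontinuous (so it attains its maximum on compact sets), and which approximates a Gaussian log-correlated field on $\Omega$ in the sense that for each $f\in C_c^\infty(\Omega)$ the law of $\int fX$ converges to that of the Gaussian field with covariance $\log|x-y|^{-1}+g(x,y)$, $g$ continuous, bounded above, $L^2$. For $\gamma>0$ let $\mu_N^\gamma(dx)=\frac{e^{\gamma X(x)}}{\mathbb E_N[e^{\gamma X(x)}]}dx$. Condition (E): there is a sequence $\epsilon_N>0$, $\epsilon_N\to0$, such that for every $\gamma>0$ there is $R_\gamma>0$ with $\mathbb E_N[e^{\gamma X(x)}]\le R_\gamma\epsilon_N^{-\gamma^2/2}$ for all $x\in\Omega$, $N$, and for every compact $A\subset\Omega$ there is $C_{\gamma,A}>0$ with $\mathbb E_N[e^{\gamma X(x)}]\ge C_{\gamma,A}^{-1}\epsilon_N^{-\gamma^2/2}$ for all $x\in A$. Condition (M): for any $\gamma<\gamma_*$ and any fixed Borel set $A\subseteq\Omega$ with $|A|>0$, $\mu_N^\gamma(A)$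 under $\mathbb P_N$ converges in distribution as $N\to\infty$ to a random variable $\zeta_A^\gamma$ with $\mathbb P[0<\zeta_A^\gamma<\infty]=1$. *)

(* Defs.v *)
From HB Require Import structures.
From mathcomp Require Import all_boot all_order all_algebra.
From mathcomp Require Import all_classical all_reals all_analysis measurable_realfun.
Set Implicit Arguments. Unset Strict Implicit. Unset Printing Implicit Defensive.
Import Order.TTheory GRing.Theory Num.Theory numFieldNormedType.Exports.
Local Open Scope classical_set_scope.
Local Open Scope ring_scope.

Section Defs.
Variable R : realType.

(** ** Euclidean space R^d, modelled as row vectors 'rV[R]_d
    (topology = the usual product topology on R^d). *)

Definition enorm (d : nat) (x : 'rV[R]_d) : R :=
  Num.sqrt (\sum_(i < d) x ord0 i ^+ 2).

(** coordinates: d-tuples (which carry the Borel product sigma-algebra)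
    to row vectors *)
Definition rv_of_tuple (d : nat) (t : d.-tuple R) : 'rV[R]_d :=
  \row_(i < d) tnth t i.

(** d-dimensional Lebesgue measure on the (Borel) sets of R^d = d.-tuple R,
    built as the iterated product  leb^{n+1} = (leb x leb^n) pushed forward
    along (x, t) |-> x :: t,  and leb^0 = Dirac mass at the empty tuple. *)
Fixpoint lebd (n : nat) : set (n.-tuple R) -> \bar R :=
  match n with
  | 0 => fun A => if `[< A [tuple] >] then 1%E else 0%E
  | n'.+1 => pushforward ((@lebesgue_measure R) \x @lebd n')%E
               (fun p : R * n'.-tuple R => [tuple of p.1 :: p.2])
  end.
Arguments lebd : clear implicits.

Definition vol (d : nat) (A : set 'rV[R]_d) : \bar R :=
  lebd d (@rv_of_tuple d @^-1` A).

Definition borel (d : nat) (A : set 'rV[R]_d) : Prop :=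
  measurable (@rv_of_tuple d @^-1` A).

Definition integ (d : nat) (A : set 'rV[R]_d) (f : 'rV[R]_d -> R) : \bar R :=
  (\int[lebd d]_(t in @rv_of_tuple d @^-1` A) (f (rv_of_tuple t))%:E)%E.

Definition integrable_on (d : nat) (A : set 'rV[R]_d) (f : 'rV[R]_d -> R) :=
  (lebd d).-integrable (@rv_of_tuple d @^-1` A) (fun t => (f (rv_of_tuple t))%:E).

Fixpoint dder (d : nat) (vs : seq 'rV[R]_d) (f : 'rV[R]_d -> R) : 'rV[R]_d -> R :=
  match vs with
  | [::] => f
  | v :: vs' => fun x => 'D_v (dder vs' f) x
  end.

Definition smooth (d : nat) (f : 'rV[R]_d -> R) : Prop :=
  forall vs : seq 'rV[R]_d,
    continuous (dder vs f) /\ (forall v x, derivable (dder vs f) x v).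

Definition test_fun (d : nat) (Om : set 'rV[R]_d) (f : 'rV[R]_d -> R) : Prop :=
  smooth f /\
  exists K : set 'rV[R]_d, compact K /\ K `<=` Om /\ (forall x, ~ K x -> f x = 0).

Definition bounded_dom (d : nat) (Om : set 'rV[R]_d) : Prop :=
  exists M : R, forall x, Om x -> enorm x <= M.

Definition I01 : set R := [set t | 0 <= t <= 1].

Definition simply_connected (d : nat) (Om : set 'rV[R]_d) : Prop :=
  (exists x, Om x) /\
  (forall x y, Om x -> Om y ->
     exists c : R -> 'rV[R]_d, {within I01, continuous c} /\
       c @` I01 `<=` Om /\ c 0 = x /\ c 1 = y) /\
  (forall c : R -> 'rV[R]_d, {within I01, continuous c} -> c @` I01 `<=` Om ->
     c 0 = c 1 ->
     exists H : R * R -> 'rV[R]_d, {within I01 `*` I01, continuous H} /\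
       H @` (I01 `*` I01) `<=` Om /\
       (forall s, I01 s -> H (s, 0) = c s /\ H (s, 1) = c 0) /\
       (forall t, I01 t -> H (0, t) = c 0 /\ H (1, t) = c 0)).

Definition smooth_boundary (d : nat) (Om : set 'rV[R]_d) : Prop :=
  forall p, closure Om p -> ~ Om p ->
    exists (U : set 'rV[R]_d) (phi : 'rV[R]_d -> R),
      open U /\ U p /\ smooth phi /\
      (forall x, U x -> closure Om x -> ~ Om x -> exists v, 'D_v phi x != 0) /\
      Om `&` U = [set x | U x /\ phi x < 0].

Definition usc_on (d : nat) (Om : set 'rV[R]_d) (f : 'rV[R]_d -> R) : Prop :=
  forall x, Om x -> forall e : R, 0 < e ->
    \forall y \near x, Om y -> f y < f x + e.

Definition gamma_star (d : nat) : R := Num.sqrt (2 * d%:R).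

Section Field.
Context (dT : measure_display) (T : measurableType dT).
Variables (P : nat -> probability T R) (d : nat) (X : T -> 'rV[R]_d -> R).

Definition mgf (N : nat) (gamma : R) (x : 'rV[R]_d) : \bar R :=
  (\int[P N]_w (expR (gamma * X w x))%:E)%E.

Definition mu_N (N : nat) (gamma : R) (A : set 'rV[R]_d) (w : T) : \bar R :=
  integ A (fun x => expR (gamma * X w x) / fine (mgf N gamma x)).

Definition cvg_dist_ereal (Y : nat -> T -> \bar R)
    (nu : probability (\bar R) R) : Prop :=
  forall h : \bar R -> R, continuous h -> (exists M, forall z, `|h z| <= M) ->
    (fun N => \int[P N]_w (h (Y N w))%:E)%E @ \oo -->
      (\int[nu]_z (h z)%:E)%E.

(** Y_N converges in distribution to the centred Gaussian N(0, s^2)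
    (s = standard deviation; s = 0 means the Dirac mass at 0) *)
Definition cvg_dist_gauss (Y : nat -> T -> R) (s : R) : Prop :=
  forall h : R -> R, continuous h -> (exists M, forall z, `|h z| <= M) ->
    (fun N => \int[P N]_w (h (Y N w))%:E)%E @ \oo -->
      (if s == 0 then (h 0)%:E
       else (\int[normal_prob 0 s]_z (h z)%:E)%E).

(** Var of \int f Y for the Gaussian field with covariance
    log|x-y|^{-1} + g(x,y) on Om *)
Definition field_var (Om : set 'rV[R]_d) (g : 'rV[R]_d -> 'rV[R]_d -> R)
    (f : 'rV[R]_d -> R) : R :=
  fine (integ Om (fun x => f x *
    fine (integ Om (fun y => (ln (enorm (x - y))^-1 + g x y) * f y)))).

Definition setting (Om : set 'rV[R]_d) : Prop :=
  (0 < d)%N /\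
  open Om /\ bounded_dom Om /\ simply_connected Om /\ smooth_boundary Om /\
  (forall x, measurable_fun setT (fun w => X w x)) /\
  measurable_fun setT (fun p : T * d.-tuple R => X p.1 (rv_of_tuple p.2)) /\
  (forall N, {ae P N, forall w, integrable_on Om (X w) /\
                (exists M, forall x, Om x -> X w x <= M) /\ usc_on Om (X w)}) /\
  (* approximation of the Gaussian log-correlated field *)
  (exists g : 'rV[R]_d -> 'rV[R]_d -> R,
     {within Om `*` Om, continuous (fun p => g p.1 p.2)} /\
     (exists M, forall x y, Om x -> Om y -> g x y <= M) /\
     (\int[lebd d]_(t in @rv_of_tuple d @^-1` Om)
        \int[lebd d]_(s in @rv_of_tuple d @^-1` Om)
          ((g (rv_of_tuple t) (rv_of_tuple s)) ^+ 2)%:E < +oo)%E /\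
     (forall f, test_fun Om f ->
        cvg_dist_gauss (fun N w => fine (integ Om (fun x => f x * X w x)))
                       (Num.sqrt (field_var Om g f)))).

Definition condE (Om : set 'rV[R]_d) (eps : nat -> R) : Prop :=
  (forall N, 0 < eps N) /\ eps @ \oo --> 0 /\
  forall gamma : R, 0 < gamma ->
    (exists Rg : R, 0 < Rg /\ forall N x, Om x ->
        (mgf N gamma x <= (Rg * eps N `^ (- (gamma ^+ 2 / 2)))%:E)%E) /\
    (forall A : set 'rV[R]_d, compact A -> A `<=` Om ->
       exists C : R, 0 < C /\ forall N x, A x ->
         ((C^-1 * eps N `^ (- (gamma ^+ 2 / 2)))%:E <= mgf N gamma x)%E).

Definition condM (Om : set 'rV[R]_d) : Prop :=
  forall gamma : R, 0 < gamma < gamma_star d ->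
  forall A : set 'rV[R]_d, borel A -> A `<=` Om -> (0 < vol A)%E ->
    exists nu : probability (\bar R) R,
      nu [set z | (0 < z < +oo)%E] = 1%E /\
      cvg_dist_ereal (fun N => mu_N N gamma A) nu.

End Field.
End Defs.

(* Main.v *)
Require Import Defs.
From HB Require Import structures.
From mathcomp Require Import all_boot all_order all_algebra.
From mathcomp Require Import all_classical all_reals all_analysis measurable_realfun.
From mathcomp Require Import ring lra.
Import Order.TTheory GRing.Theory Num.Theory numFieldNormedType.Exports.
Local Open Scope classical_set_scope.
Local Open Scope ring_scope.
Import HBNNSimple.

Section GenInt.
Context (R : realType) d (T : measurableType d) (mu : set T -> \bar R).
Hypothesis mu0 : mu set0 = 0%E.
Hypothesis mu_ge0 : forall A, (0 <= mu A)%E.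
Local Open Scope ereal_scope.

Lemma gsint_term_ge0 (f : {nnsfun T >-> R}) x : 0 <= x%:E * mu (f @^-1` [set x]).
Proof.
have [x0|x0] := ltP x 0%R.
  rewrite (_ : f @^-1` _ = set0) ?mu0 ?mule0//.
  apply/seteqP; split => // t /= ft; have h : (0 <= f t)%R by exact: fun_ge0.
  by move: h; rewrite ft leNgt x0.
by rewrite mule_ge0.
Qed.

Lemma gsintegralrM (r : R) (f : {nnsfun T >-> R}) : (0 < r)%R ->
  sintegral mu (cst r \* f)%R = r%:E * sintegral mu f.
Proof.
move=> r0; have r0' : r != 0%R by rewrite gt_eqF.
rewrite !sintegralET ge0_mule_fsumr; last by move=> x; exact: gsint_term_ge0.
rewrite (reindex_fsbigT ( *%R r))/=; last first.
  by exists ( *%R r^-1); [exact: mulKf|exact: mulVKf].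
by apply: eq_fsbigr => x; rewrite preimage_cstM// [(_ / r)%R]mulrC mulKf// muleA.
Qed.

Lemma gsintegral0 (h : {nnsfun T >-> R}) : (forall x, h x = 0%R) -> sintegral mu h = 0.
Proof.
move=> h0; rewrite sintegralET fsbig1// => x _.
have [->|x0] := eqVneq x 0%R; first by rewrite mul0e.
rewrite (_ : h @^-1` _ = set0) ?mu0 ?mule0//.
by apply/seteqP; split => // t /=; rewrite h0 => /esym/eqP; rewrite (negbTE x0).
Qed.

Lemma gint_le_scale (D : set T) (f g : T -> R) (K : R) : (0 < K)%R ->
  (forall x, D x -> 0 <= f x)%R -> (forall x, D x -> 0 <= g x)%R ->
  (forall x, D x -> f x <= K * g x)%R ->
  \int[mu]_(x in D) (f x)%:E <= K%:E * \int[mu]_(x in D) (g x)%:E.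
Proof.
move=> K0 f0 g0 fg.
have hD0 (h : T -> R) : (forall x, D x -> 0 <= h x)%R ->
    forall x, setT x -> 0 <= ((fun x => (h x)%:E) \_ D) x.
  by move=> h0 x _; rewrite /patch; case: ifP => [/[!inE] /h0|]; rewrite ?lee_fin.
have negE (h : T -> R) : (forall x, D x -> 0 <= h x)%R ->
  ereal_sup [set sintegral mu s | s in [set s : {nnsfun T >-> R} |
     forall x, (s x)%:E <= ((fun x => (h x)%:E) \_ D)^\- x]] = 0.
  move=> h0; apply/eqP; rewrite eq_le; apply/andP; split; last first.
    apply/ereal_sup_ubound; exists nnsfun0.
      by move=> x /=; exact: funeneg_ge0.
    by apply: gsintegral0 => x.
  apply/ge_ereal_sup => /= x [s /= s0 <-].
  rewrite gsintegral0// => y; apply/eqP; rewrite eq_le (@fun_ge0 _ _ s y) andbT -lee_fin.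
  by rewrite (le_trans (s0 y))// (ge0_funenegE (hD0 _ h0) (in_setT y)).
rewrite /integral !negE// !sube0.
apply/ge_ereal_sup => /= _ [s /= sf <-].
have Ki : (0 <= K^-1)%R by rewrite invr_ge0 ltW.
pose s' := scale_nnsfun s Ki.
have -> : sintegral mu s = K%:E * sintegral mu s'.
  by rewrite /s' /scale_nnsfun /= gsintegralrM ?invr_gt0// muleA -EFinM divff ?gt_eqF// mul1e.
apply: lee_wpmul2l; first by rewrite lee_fin ltW.
apply/ereal_sup_ubound; exists s' => //= x.
have := sf x; rewrite (ge0_funeposE (hD0 _ f0) (in_setT x)).
rewrite (ge0_funeposE (hD0 _ g0) (in_setT x)) /patch; case: ifP => [/[!inE] Dx|_].
  rewrite /= !lee_fin => sx.
  rewrite ler_pdivrMl// (le_trans sx)//; exact: fg.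
rewrite /= !lee_fin => sx; rewrite mulr_ge0_le0 //.
Qed.
End GenInt.

Lemma lebd_ge0_set0 (R : realType) (n : nat) :
  (forall A, (0 <= @lebd R n A)%E) /\ @lebd R n set0 = 0%E.
Proof.
elim: n => [|n [IH1 IH2]].
  split => [A|] /=; first by case: (asboolP _).
  by case: (asboolP _).
split => [A|] /=.
  rewrite /pushforward /product_measure1; apply: integral_ge0 => x _ /=; exact: IH1.
rewrite /pushforward /product_measure1 preimage_set0.
apply: integral0_eq => x _ /=; by rewrite xsection0.
Qed.

Section Borel.
Context {R : realType} {d : nat}.
Local Notation rv := (@rv_of_tuple R d).

Definition boxq (p : (d.-tuple rat * rat)%type) : set (d.-tuple R) :=
  [set t | forall i : 'I_d, `|tnth t i - ratr (tnth p.1 i)| < ratr p.2].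

Lemma measurable_coord_lt (i : 'I_d) (c r : R) :
  measurable [set t : d.-tuple R | `|tnth t i - c| < r].
Proof.
have mg : measurable_fun setT (fun t : d.-tuple R => `|tnth t i - c|).
  apply: measurableT_comp => //; apply: measurable_funB => //.
  exact: measurable_tnth.
have := mg measurableT _ (measurable_itv `]-oo, r[).
rewrite setTI; congr measurable; apply/seteqP; split => t /=;
  by rewrite in_itv /=.
Qed.

Lemma measurable_boxq p : measurable (boxq p).
Proof.
pose F (k : nat) : set (d.-tuple R) := match @insub _ (fun k => k < d)%N 'I_d k with
  | Some i => [set t | `|tnth t i - ratr (tnth p.1 i)| < ratr p.2]
  | None => setT end.
have -> : boxq p = \bigcap_k F k.
  apply/seteqP; split => t.
    move=> bt k _; rewrite /F; case: insubP => [i _ _|_] //; exact: bt.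
  move=> bt i; have := bt (val i) I; rewrite /F valK; exact.
apply: bigcapT_measurable => k; rewrite /F; case: insubP => [i _ _|_] //.
exact: measurable_coord_lt.
Qed.

Lemma open_preimage_measurable (O : set 'rV[R]_d) : open O ->
  measurable (rv @^-1` O).
Proof.
move=> oO.
pose G (k : nat) : set (d.-tuple R) := match @unpickle (d.-tuple rat * rat)%type k with
  | Some p => if `[< boxq p `<=` rv @^-1` O >] then boxq p else set0
  | None => set0 end.
have -> : rv @^-1` O = \bigcup_k G k.
  apply/seteqP; split => t; last first.
    move=> [k _]; rewrite /G; case: unpickle => [p|//].
    by case: asboolP => // sub /sub.
  move=> Ot; set x := rv t.
  have : nbhs x O by move: oO; rewrite openE; exact.
  move=> /nbhs_ballP [e /= e0 exO].
  have e3 : 0 < e / 3 by rewrite divr_gt0.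
  have [r Hr] : exists r : rat, ratr r \in `](e / 3), (2 * e / 3)[.
    apply: rat_in_itvoo; lra.
  have [q Hq] : exists q : d.-tuple rat, forall i, ratr (tnth q i) \in `](tnth t i - e / 3), (tnth t i + e / 3)[.
    have h i : exists q : rat, ratr q \in `](tnth t i - e / 3), (tnth t i + e / 3)[.
      apply: rat_in_itvoo; lra.
    exists [tuple projT1 (cid (h i)) | i < d] => i.
    by rewrite tnth_mktuple; exact: (projT2 (cid (h i))).
  exists (pickle (q, r)) => //.
  rewrite /G pickleK; case: asboolP => [_|nsub].
    move=> i /=; move: (Hq i) Hr; rewrite !in_itv /= => /andP[h1 h2] /andP[h3 h4].
    rewrite distrC ltr_norml; apply/andP; split; lra.
  exfalso; apply: nsub => y /= By; apply: exO.
  rewrite /ball /=; split => // i j; rewrite !mxE.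
  move: (Hq j) (By j) Hr; rewrite !in_itv /= => /andP[h1 h2] + /andP[h3 h4].
  rewrite ltr_norml => /andP[h5 h6].
  rewrite -ball_normE /= ltr_norml; apply/andP; split; lra.
apply: bigcupT_measurable => k; rewrite /G; case: unpickle => [p|//].
case: asboolP => _ //; exact: measurable_boxq.
Qed.

Lemma compact_borel (A : set 'rV[R]_d) : compact A -> borel A.
Proof.
move=> cA; have clA : closed A by apply: compact_closed => //; exact: hausdorff.
rewrite /borel (_ : rv @^-1` A = ~` (rv @^-1` (~` A))); last first.
  by rewrite -preimage_setC setCK.
apply: measurableC; apply: open_preimage_measurable.
by rewrite openC.
Qed.
End Borel.

Lemma contract_continuous (R : realType) : continuous (@contract R).
Proof.
move=> z; apply/cvgrPdist_lt => e e0.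
have := @nbhsx_ballx _ _ z e e0.
move=> H; move: H; apply: filterS => y; rewrite /ball /= /ereal_ball //.
Qed.

Lemma inner_prob d (T : measurableType d) (R : realType) (P : probability T R)
  (f : T -> R) (a : R) :
  (forall w, 0 <= f w <= 1) -> (a%:E < \int[P]_w (f w)%:E)%E ->
  exists C, measurable C /\ C `<=` [set w | 0 < f w] /\ (a%:E < P C)%E.
Proof.
move=> f01; rewrite ge0_integralTE; last by move=> x; rewrite lee_fin; case/andP: (f01 x).
move=> /ereal_sup_gt [_ [h /= hf <-]] ah.
have mC : measurable (h @^-1` `]0%R, +oo[) := measurable_funPTI h (measurable_itv _).
exists (h @^-1` `]0%R, +oo[); split => //; split.
  move=> w /=; rewrite in_itv /= andbT => hw; apply: (lt_le_trans hw).
  by rewrite -lee_fin hf.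
apply: (lt_le_trans ah); rewrite -(sintegral_indic P (h @^-1` `]0%R, +oo[)).
have -> : \1_(h @^-1` `]0%R, +oo[) = indic_nnsfun R mC :> (T -> R) by [].
apply: le_sintegral => x /=; change (h x <= \1_(h @^-1` `]0%R, +oo[) x); rewrite indicE; case: (boolP (x \in _)).
  rewrite inE /= in_itv /= andbT => _; apply: (@le_trans _ _ (f x)).
    by rewrite -lee_fin hf.
  by case/andP: (f01 x).
rewrite notin_setE /= in_itv /= andbT => /negP; rewrite -leNgt => hx. by [].
Qed.

Lemma lower_prob (R : realType) (nu : probability (\bar R) R) (h : \bar R -> R)
  (F : set (\bar R)) : measurable F -> (forall z, 0 <= h z) ->
  (forall z, F z -> 1 <= h z) -> (nu F <= \int[nu]_z (h z)%:E)%E.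
Proof.
move=> mF h0 hF; rewrite ge0_integralTE; last by move=> x; rewrite lee_fin.
rewrite -(sintegral_indic nu F).
apply: ereal_sup_ubound; exists (indic_nnsfun R mF) => //= z.
change ((\1_F z)%:E <= (h z)%:E)%E; rewrite indicE; case: (boolP (z \in _)) => [/[!inE] /hF|_]; rewrite lee_fin //.
Qed.

Section Ramp.
Context {R : realType}.
Definition ramp (c c0 : R) (z : \bar R) : R :=
  Num.min 1 (Num.max 0 (c * contract z + c0)).

Lemma ramp_ge0 c c0 z : 0 <= ramp c c0 z.
Proof. by rewrite /ramp le_min ler01 le_max lexx. Qed.

Lemma ramp_le1 c c0 z : ramp c c0 z <= 1.
Proof. by rewrite /ramp ge_min lexx. Qed.

Lemma ramp_bounded c c0 : exists M, forall z, `|ramp c c0 z| <= M.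
Proof. by exists 1 => z; rewrite ger0_norm ?ramp_ge0 ?ramp_le1. Qed.

Lemma ramp_one c c0 z : 1 <= c * contract z + c0 -> 1 <= ramp c c0 z.
Proof. by move=> h; rewrite /ramp le_min lexx le_max h orbT. Qed.

Lemma ramp_pos c c0 z : 0 < ramp c c0 z -> 0 < c * contract z + c0.
Proof. by rewrite /ramp lt_min lt_max ltxx /= => /andP[]. Qed.

Lemma ramp_continuous c c0 : continuous (ramp c c0).
Proof.
move=> z.
have hl : {for z, continuous (fun z : \bar R => (c * contract z + c0 : R^o))}.
  apply: cvgD; last exact: cvg_cst.
  apply: cvgM; first exact: cvg_cst.
  exact: contract_continuous.
change ({for z, continuous ((fun _ => (1:R^o)) \min ((fun _ => (0:R^o)) \max
  (fun z : \bar R => (c * contract z + c0 : R^o))))}).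
apply: continuous_min; first exact: cvg_cst.
apply: continuous_max; first exact: cvg_cst.
exact: hl.
Qed.
End Ramp.

Lemma ecvg_gt (R : realType) (u : nat -> \bar R) (l a : \bar R) :
  u @ \oo --> l -> (a < l)%E -> exists N, forall n, (N <= n)%N -> (a < u n)%E.
Proof.
move=> hu al; have := hu _ (open_ereal_gt' al).
by move=> [N _ hN]; exists N => n /hN.
Qed.

Lemma nu_lower (R : realType) (nu : probability (\bar R) R) (e : R) :
  nu [set z | (0 < z < +oo)%E] = 1%E -> 0 < e ->
  exists k : nat, ((1 - e)%:E < nu [set z | ((k.+1%:R)^-1)%:E <= z])%E.
Proof.
move=> nu1 e0.
pose F (k : nat) := [set z : \bar R | ((k.+1%:R)^-1)%:E <= z]%E.
have mF k : measurable (F k).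
  have := @emeasurable_itv R `[((k.+1%:R)^-1)%:E, +oo[.
  congr measurable; apply/seteqP; split => z /=; rewrite in_itv /= andbT //.
have mU : measurable (\bigcup_k F k) by exact: bigcupT_measurable.
have ndF : nondecreasing_seq F.
  move=> m n mn; apply/subsetPset => z /=; apply: le_trans; rewrite lee_fin lef_pV2 ?posrE//.
  by rewrite ler_nat.
have := @nondecreasing_cvg_mu _ _ R nu F mF mU ndF.
move=> hc; have [|N hN] := @ecvg_gt R _ _ ((1 - e)%:E) hc.
  apply: (@lt_le_trans _ _ 1%E); first by rewrite lte_fin; lra.
  rewrite -nu1; apply: le_measure.
  - rewrite inE; have := @emeasurable_itv R `]0%E, +oo%E[.
    congr measurable; apply/seteqP; split => z /=; rewrite in_itv //.
  - by rewrite inE.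
  move=> z /= /andP[z0 zoo].
  have [r zr] : exists r : R, z = r%:E.
    by case: z z0 zoo => // r; exists r.
  subst z; rewrite lte_fin in z0.
  exists (Num.Def.trunc r^-1) => //; rewrite /F /= lee_fin -[leRHS]invrK lef_pV2 ?posrE ?invr_gt0//.
  by rewrite ltW// truncnS_gt.
by exists N; exact: hN.
Qed.

Lemma nu_upper (R : realType) (nu : probability (\bar R) R) (e : R) :
  nu [set z | (0 < z < +oo)%E] = 1%E -> 0 < e ->
  exists k : nat, ((1 - e)%:E < nu [set z | z <= (k%:R)%:E])%E.
Proof.
move=> nu1 e0.
pose F (k : nat) := [set z : \bar R | z <= (k%:R)%:E]%E.
have mF k : measurable (F k).
  have := @emeasurable_itv R `]-oo, (k%:R)%:E].
  congr measurable; apply/seteqP; split => z /=; rewrite in_itv /= //.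
have mU : measurable (\bigcup_k F k) by exact: bigcupT_measurable.
have ndF : nondecreasing_seq F.
  by move=> m n mn; apply/subsetPset => z /= /le_trans; apply; rewrite lee_fin ler_nat.
have := @nondecreasing_cvg_mu _ _ R nu F mF mU ndF.
move=> hc; have [|N hN] := @ecvg_gt R _ _ ((1 - e)%:E) hc.
  apply: (@lt_le_trans _ _ 1%E); first by rewrite lte_fin; lra.
  rewrite -nu1; apply: le_measure.
  - rewrite inE; have := @emeasurable_itv R `]0%E, +oo%E[.
    congr measurable; apply/seteqP; split => z /=; rewrite in_itv //.
  - by rewrite inE.
  move=> z /= /andP[z0 zoo].
  have [r zr] : exists r : R, z = r%:E.
    by case: z z0 zoo => // r; exists r.
  subst z; exists (Num.Def.trunc r).+1 => //; rewrite /F /= lee_fin ltW//.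
  by rewrite truncnS_gt.
by exists N; exact: hN.
Qed.

Section Ramp2.
Context {R : realType}.
Implicit Types (a b : R) (z : \bar R).

Let rup a b z : a < b -> (b - a)^-1 * contract z + - a / (b - a) = (contract z - a) / (b - a).
Proof. by move=> _; ring. Qed.
Let rdn a b z : a < b -> - (b - a)^-1 * contract z + b / (b - a) = (b - contract z) / (b - a).
Proof. by move=> _; ring. Qed.

Lemma ramp_up_one a b z : a < b -> b <= contract z -> 1 <= ramp ((b - a)^-1) (- a / (b - a)) z.
Proof.
move=> ab bz; apply: ramp_one; rewrite rup// ler_pdivlMr ?subr_gt0// mul1r; lra.
Qed.
Lemma ramp_up_pos a b z : a < b -> 0 < ramp ((b - a)^-1) (- a / (b - a)) z -> a < contract z.
Proof.
move=> ab /ramp_pos; rewrite rup// pmulr_lgt0 ?invr_gt0 ?subr_gt0// => h; lra.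
Qed.
Lemma ramp_dn_one a b z : a < b -> contract z <= a -> 1 <= ramp (- (b - a)^-1) (b / (b - a)) z.
Proof.
move=> ab bz; apply: ramp_one; rewrite rdn// ler_pdivlMr ?subr_gt0// mul1r; lra.
Qed.
Lemma ramp_dn_pos a b z : a < b -> 0 < ramp (- (b - a)^-1) (b / (b - a)) z -> contract z < b.
Proof.
move=> ab /ramp_pos; rewrite rdn// pmulr_lgt0 ?invr_gt0 ?subr_gt0// => h; lra.
Qed.
End Ramp2.

Lemma key_ineq (R : realType) (L C2 Rg1 g1 g2 c u x m1 m2 : R) :
  L <= 0 -> 0 < C2 -> 0 < Rg1 -> 0 < m1 ->
  m1 <= Rg1 * expR (- (g1 ^+ 2 / 2) * L) ->
  C2^-1 * expR (- (g2 ^+ 2 / 2) * L) <= m2 ->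
  x <= u * - L -> g1 < g2 ->
  c <= (g2 - g1) * ((g2 + g1) / 2 - u) ->
  expR (g2 * x) / m2 <= (C2 * Rg1 * expR (c * L)) * (expR (g1 * x) / m1).
Proof.
move=> L0 C20 R0 m10 hm1 hm2 hx g12 hc.
have a0 : 0 < C2^-1 * expR (- (g2 ^+ 2 / 2) * L) by rewrite mulr_gt0 ?invr_gt0 ?expR_gt0.
have m20 : 0 < m2 by exact: lt_le_trans hm2.
have step1 : expR (g2 * x) / m2 <= expR (g2 * x) * (C2 * expR (g2 ^+ 2 / 2 * L)).
  rewrite ler_pM2l ?expR_gt0// -[C2 * _]invrK lef_pV2 ?posrE//; last first.
    by rewrite invr_gt0 mulr_gt0 ?expR_gt0.
  by rewrite invfM -expRN -mulNr.
have step2 : C2 * expR (c * L) * expR (g1 * x) * expR (g1 ^+ 2 / 2 * L) <=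
    (C2 * Rg1 * expR (c * L)) * (expR (g1 * x) / m1).
  have -> : (C2 * Rg1 * expR (c * L)) * (expR (g1 * x) / m1) =
     (C2 * expR (c * L) * expR (g1 * x)) * (Rg1 / m1) by rewrite mulrC; field; lra.
  rewrite ler_pM2l ?mulr_gt0 ?expR_gt0// ler_pdivlMr// -ler_pdivlMl ?expR_gt0//.
  by rewrite -expRN -mulNr mulrC.
apply: (le_trans step1); apply: le_trans step2.
have -> : expR (g2 * x) * (C2 * expR (g2 ^+ 2 / 2 * L)) = C2 * expR (g2 * x + g2 ^+ 2 / 2 * L).
  by rewrite expRD; ring.
have -> : C2 * expR (c * L) * expR (g1 * x) * expR (g1 ^+ 2 / 2 * L) =
  C2 * expR (c * L + g1 * x + g1 ^+ 2 / 2 * L) by rewrite !expRD; ring.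
rewrite ler_pM2l// ler_expR.
have h1 : (g2 - g1) * x <= (g2 - g1) * (u * - L) by rewrite ler_pM2l ?subr_gt0.
have h2 : 0 <= (- L) * ((g2 - g1) * ((g2 + g1) / 2 - u) - c) by rewrite mulr_ge0 ?subr_ge0 ?oppr_ge0.
nra.
Qed.

Lemma powE (R : realType) (a x : R) : 0 < a -> a `^ x = expR (x * ln a).
Proof. by move=> a0; rewrite /powR gt_eqF. Qed.

Lemma fine_bounds {R : realType} {a b : R} {z : \bar R} :
  (a%:E <= z)%E -> (z <= b%:E)%E -> a <= fine z <= b.
Proof. by case: z => [r||] //=; rewrite ?lee_fin => -> ->. Qed.

Lemma mu_ratio (R : realType) (dT : measure_display) (T : measurableType dT)
  (P : nat -> probability T R) (d : nat) (X : T -> 'rV[R]_d -> R)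
  (A : set 'rV[R]_d) (ep g1 g2 u c C1 C2 Rg1 Rg2 : R) (N : nat) (w : T) :
  0 < ep <= 1 -> 0 < C1 -> 0 < C2 -> 0 < Rg1 -> 0 < Rg2 -> g1 < g2 ->
  c <= (g2 - g1) * ((g2 + g1) / 2 - u) ->
  (forall x, A x -> (mgf P X N g1 x <= (Rg1 * ep `^ (- (g1 ^+ 2 / 2)))%:E)%E) ->
  (forall x, A x -> ((C1^-1 * ep `^ (- (g1 ^+ 2 / 2)))%:E <= mgf P X N g1 x)%E) ->
  (forall x, A x -> (mgf P X N g2 x <= (Rg2 * ep `^ (- (g2 ^+ 2 / 2)))%:E)%E) ->
  (forall x, A x -> ((C2^-1 * ep `^ (- (g2 ^+ 2 / 2)))%:E <= mgf P X N g2 x)%E) ->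
  (forall x, A x -> X w x <= u * ln ep^-1) ->
  (mu_N P X N g2 A w <= (C2 * Rg1 * expR (c * ln ep))%:E * mu_N P X N g1 A w)%E.
Proof.
move=> /andP[ep0 ep1] C10 C20 R10 R20 g12 hc hu1 hl1 hu2 hl2 hw.
have [lb0 lbs] := @lebd_ge0_set0 R d.
rewrite /mu_N /integ; apply: (@gint_le_scale R _ _ (@lebd R d) lbs lb0).
- by rewrite !mulr_gt0 ?expR_gt0.
- move=> t At /=; rewrite divr_ge0 ?expR_ge0//.
  have /andP[+ _] := fine_bounds (hl2 _ At) (hu2 _ At).
  by apply: le_trans; rewrite mulr_ge0 ?invr_ge0 ?powR_ge0 ?ltW.
- move=> t At /=; rewrite divr_ge0 ?expR_ge0//.
  have /andP[+ _] := fine_bounds (hl1 _ At) (hu1 _ At).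
  by apply: le_trans; rewrite mulr_ge0 ?invr_ge0 ?powR_ge0 ?ltW.
move=> t At /=.
have /andP[l1 u1] := fine_bounds (hl1 _ At) (hu1 _ At).
have /andP[l2 _] := fine_bounds (hl2 _ At) (hu2 _ At).
rewrite !powE// in l1 u1 l2.
apply: key_ineq => //.
- by rewrite ln_le0.
- by apply: lt_le_trans l1; rewrite mulr_gt0 ?invr_gt0 ?expR_gt0.
- by rewrite -lnV ?posrE//; exact: hw.
exact: hc.
Qed.

Lemma prob_small {R : realType} (p : \bar R) (a : R) :
  ((1 - a)%:E < p)%E -> (p <= 1)%E -> (1 - p <= a%:E)%E.
Proof.
case: p => [r||] //=; rewrite ?lte_fin ?lee_fin => h1 h2; lra.
Qed.

Theorem theorem3p5 (R : realType) (dT : measure_display) (T : measurableType dT)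
  (P : nat -> probability T R) (d : nat) (X : T -> 'rV[R]_d -> R)
  (Om : set 'rV[R]_d) (eps : nat -> R) :
  setting P X Om -> condE P X Om eps -> condM P X Om ->
  forall A : set 'rV[R]_d, compact A -> A `<=` Om -> (0 < vol A)%E ->
  forall delta : R, 0 < delta ->
  (* P_N[max_A X <= (gamma_* - delta) log eps_N^{-1}] -> 0, as an outer
     probability (no measurability of the event is presupposed) *)
  forall e : R, 0 < e ->
    \forall N \near \oo, exists B : set T, measurable B /\
      [set w | forall x, A x -> X w x <= (gamma_star R d - delta) * ln (eps N)^-1]
        `<=` B /\ (P N B <= e%:E)%E.
Proof.
move=> [d0 _] [eps0 [epscvg hE]] hM A cA AOm volA delta delta0 e e0.
set gs := gamma_star R d.
have gs0 : 0 < gs by rewrite /gs /gamma_star sqrtr_gt0 mulr_gt0 // ltr0n.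
set dl := Num.min delta gs.
have dl0 : 0 < dl by rewrite lt_min delta0 gs0.
have dld : dl <= delta by rewrite ge_min lexx.
have dlg : dl <= gs by rewrite ge_min lexx orbT.
set g1 := gs - 2 * dl / 3.
set g2 := gs - dl / 3.
have g10 : 0 < g1 by rewrite /g1; lra.
have g12 : g1 < g2 by rewrite /g1 /g2; lra.
have g2s : g2 < gs by rewrite /g2; lra.
have g20 : 0 < g2 by lra.
set c := dl * dl / 6.
have c0 : 0 < c by rewrite /c divr_gt0 ?mulr_gt0.
have hc : c <= (g2 - g1) * ((g2 + g1) / 2 - (gs - delta)).
  rewrite /c /g1 /g2.
  have -> : (gs - dl / 3 - (gs - 2 * dl / 3)) * ((gs - dl / 3 + (gs - 2 * dl / 3)) / 2 - (gs - delta))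
     = dl / 3 * (delta - dl / 2) by field.
  have : 0 <= dl / 3 * (delta - dl) by rewrite mulr_ge0 ?subr_ge0// divr_ge0// ltW.
  nra.
have [[Rg1 [Rg10 hup1]] hlow1] := hE g1 g10.
have [C1 [C10 hlo1]] := hlow1 A cA AOm.
have [[Rg2 [Rg20 hup2]] hlow2] := hE g2 g20.
have [C2 [C20 hlo2]] := hlow2 A cA AOm.
have bA : borel A := compact_borel A cA.
have g2i : 0 < g2 < gs by rewrite g20 g2s.
have g1i : 0 < g1 < gs by rewrite g10 /=; lra.
have [nu2 [nu21 cv2]] := hM g2 g2i A bA AOm volA.
have [nu1 [nu11 cv1]] := hM g1 g1i A bA AOm volA.
have e4 : 0 < e / 4 by rewrite divr_gt0.
have [k hk] := @nu_lower R nu2 (e / 4) nu21 e4.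
set eta := (k.+1%:R)^-1 : R.
have eta0 : 0 < eta by rewrite /eta invr_gt0.
set a1 := contract ((eta / 2)%:E).
set b1 := contract (eta%:E).
have ab1 : a1 < b1 by rewrite /a1 /b1 lt_contract lte_fin; lra.
set h1 := ramp ((b1 - a1)^-1) (- a1 / (b1 - a1)).
have [k' hk'] := @nu_upper R nu1 (e / 4) nu11 e4.
set M : R := k'%:R.
have M0 : 0 <= M by rewrite /M ler0n.
set a2 := contract (M%:E).
set b2 := contract ((M + 1)%:E).
have ab2 : a2 < b2 by rewrite /a2 /b2 lt_contract lte_fin; lra.
set h2 := ramp (- (b2 - a2)^-1) (b2 / (b2 - a2)).
have I2 : ((1 - e / 4)%:E < \int[nu2]_z (h1 z)%:E)%E.
  apply: (lt_le_trans hk); apply: lower_prob.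
  - have := @emeasurable_itv R `[(eta%:E), +oo[.
    congr measurable; apply/seteqP; split => z /=; rewrite in_itv /= andbT //.
  - by move=> z; exact: ramp_ge0.
  - move=> z /= hz; apply: ramp_up_one => //.
    by rewrite /b1 le_contract.
have I1 : ((1 - e / 4)%:E < \int[nu1]_z (h2 z)%:E)%E.
  apply: (lt_le_trans hk'); apply: lower_prob.
  - have := @emeasurable_itv R `]-oo, (M%:E)].
    congr measurable; apply/seteqP; split => z /=; rewrite in_itv /= //.
  - by move=> z; exact: ramp_ge0.
  - move=> z /= hz; apply: ramp_dn_one => //.
    by rewrite /a2 le_contract.
have [N1 hN1] := @ecvg_gt R _ _ _ (cv2 h1 (ramp_continuous _ _) (ramp_bounded _ _)) I2.
have [N2 hN2] := @ecvg_gt R _ _ _ (cv1 h2 (ramp_continuous _ _) (ramp_bounded _ _)) I1.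
set th' := eta / 2 / (C2 * Rg1 * (M + 1)).
have th'0 : 0 < th' by rewrite /th' !divr_gt0 ?mulr_gt0 //; lra.
set th := Num.min 1 (expR (ln th' / c)).
have th0 : 0 < th by rewrite /th lt_min ltr01 expR_gt0.
have [N3 _ hN3] := cvgr_lt 0 epscvg th th0.
exists (maxn N1 (maxn N2 N3)) => // N /= hN.
have hN1' : (N1 <= N)%N by apply: leq_trans hN; rewrite leq_maxl.
have hN2' : (N2 <= N)%N.
  by apply: leq_trans hN; rewrite (leq_trans (leq_maxl N2 N3))// leq_maxr.
have hN3' : (N3 <= N)%N.
  by apply: leq_trans hN; rewrite (leq_trans (leq_maxr N2 N3))// leq_maxr.
have epsth : eps N < th := hN3 N hN3'.
have epsN0 := eps0 N.
have ep1 : eps N <= 1.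
  by apply: ltW; apply: (lt_le_trans epsth); rewrite /th ge_min lexx.
set K := C2 * Rg1 * expR (c * ln (eps N)).
have K0 : 0 < K by rewrite /K !mulr_gt0 ?expR_gt0.
have Kb : K * (M + 1) <= eta / 2.
  have h : eps N < expR (ln th' / c).
    by apply: (lt_le_trans epsth); rewrite /th ge_min lexx orbT.
  have h' : ln (eps N) < ln th' / c.
    by rewrite -[X in _ < X](expRK (ln th' / c)) ltr_ln ?posrE ?expR_gt0.
  have h'' : expR (c * ln (eps N)) <= th'.
    rewrite -[X in _ <= X](lnK (_ : th' \in Num.pos)) ?posrE// ler_expR.
    by rewrite mulrC -ler_pdivlMr// ltW.
  have E : C2 * Rg1 * th' * (M + 1) = eta / 2.
    rewrite /th'; field.
    by rewrite !gt_eqF//; rewrite -/M; lra.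
  rewrite -E /K ler_wpM2r//; first lra.
  by rewrite ler_wpM2l// mulr_ge0// ltW.
have f1 : forall w, 0 <= h1 (mu_N P X N g2 A w) <= 1.
  by move=> w; rewrite ramp_ge0 ramp_le1.
have f2 : forall w, 0 <= h2 (mu_N P X N g1 A w) <= 1.
  by move=> w; rewrite ramp_ge0 ramp_le1.
have [Ca [mCa [sCa PCa]]] := @inner_prob dT T R (P N) _ _ f1 (hN1 N hN1').
have [Cb [mCb [sCb PCb]]] := @inner_prob dT T R (P N) _ _ f2 (hN2 N hN2').
exists (~` (Ca `&` Cb)); split; first by apply: measurableC; apply: measurableI.
split.
  move=> w /= hw [wa wb].
  have y2 : ((eta / 2)%:E < mu_N P X N g2 A w)%E.
    by have := ramp_up_pos _ _ _ ab1 (sCa w wa); rewrite /a1 lt_contract.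
  have y1 : (mu_N P X N g1 A w < (M + 1)%:E)%E.
    by have := ramp_dn_pos _ _ _ ab2 (sCb w wb); rewrite /b2 lt_contract.
  have hr := @mu_ratio R dT T P d X A (eps N) g1 g2 (gs - delta) c C1 C2 Rg1 Rg2 N w
    (_ : 0 < eps N <= 1) C10 C20 Rg10 Rg20 g12 hc
    (fun x Ax => hup1 N x (AOm x Ax)) (hlo1 N) (fun x Ax => hup2 N x (AOm x Ax))
    (hlo2 N) hw.
  have : (mu_N P X N g2 A w <= (eta / 2)%:E)%E.
    apply: (le_trans (hr _)); first by rewrite epsN0 ep1.
    apply: (@le_trans _ _ ((K * (M + 1))%:E)); last by rewrite lee_fin.
    rewrite [X in (_ <= X)%E]EFinM; apply: lee_wpmul2l; rewrite ?lee_fin ?ltW//.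
  by move/(lt_le_trans y2); rewrite ltxx.
rewrite setCI; apply: (le_trans (measureU2 _ _ _)).
- exact: measurableC.
- exact: measurableC.
have ha : (P N (~` Ca) <= (e / 4)%:E)%E.
  by rewrite probability_setC//; exact: prob_small PCa (probability_le1 (P N) mCa).
have hb : (P N (~` Cb) <= (e / 4)%:E)%E.
  by rewrite probability_setC//; exact: prob_small PCb (probability_le1 (P N) mCb).
apply: (le_trans (leeD ha hb)).
by rewrite -EFinD lee_fin; lra.
Qed.
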